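(* For every $d\in\mathbb{Z}^+$ there exists a deterministic 1-aware population protocol computing the predicate $R\colon\mathbb{Z}^+\to\{0,1\}$, $R(n)=\mathbb{I}\{n\ge d\}$ (i.e. $R(n)=1$ if $n\ge d$ and $R(n)=0$ otherwise), whose number of states is at most $\log_2 d + \min\{e,z\} + O(1)$, where $e$ is the number of $1$'s in the binary representation of $d$, $z$ is the number of $0$'s in the binary representation of $d-1$, and the $O(1)$ term is an absolute constant independent of $d$.
   Context: A population protocol is a tuple $\Pi=\langle Q,Q_0,Q_1,q_{init},\delta\rangle$ where $Q$ is a finite set of states, $Q=Q_0\sqcup Q_1$ (disjoint union), $q_{init}\in Q$ is the initial state, and $\delta\colon Q^2\to 2^{Q^2}\setminus\{\varnothing\}$ is the transition function. $\Pi$ is deterministic if $|\delta(q_1,q_2)|=1$ for all $q_1,q_2\in Q$. For $n\in\mathbb{Z}^+$, an $n$-size configuration is a function $C\colon[n]\to Q$, where $[n]=\{1,\dots,n\}$; the initial configuration $I_n$ maps every element to $q_{init}$. A pair $(C_1,C_2)$ of $n$-size configurations is a transition if there are distinct $i,j\in[n]$ with $(C_2(i),C_2(j))\in\delta(C_1(i),C_1(j))$ and $C_2(k)=C_1(k)$ for all $k\ne i,j$ (the pair $(i,j)$ is ordered). $D$ is reachable from $C$ if there is a finite sequence $C=C_1,\dots,C_k=D$ ($k\ge1$) of configurations with each $(C_i,C_{i+1})$ a transition. An execution is an infinite sequence $(C_i)_{i\ge1}$ with $C_1=I_n$ for some $n$ and each $(C_i,C_{i+1})$ a transition; it is fair if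 whenever a configuration $C$ occurs infinitely often in it and $D$ is reachable from $C$, then $D$ also occurs infinitely often. $\Pi$ is a 1-aware population protocol computing $R\colon\mathbb{Z}^+\to\{0,1\}$ if for every $n\in\mathbb{Z}^+$: if $R(n)=0$ then every configuration $C$ reachable from $I_n$ satisfies $C([n])\subseteq Q_0$; and if $R(n)=1$ then for every fair execution $(C_i)_{i\ge1}$ with $C_1=I_n$ there is $i_0$ such that $C_i([n])\subseteq Q_1$ for all $i\ge i_0$. The number of states of $\Pi$ is $|Q|$. *)

(* Defs.v *)
From mathcomp Require Import all_boot.
Set Implicit Arguments. Unset Strict Implicit. Unset Printing Implicit Defensive.

(* Population protocols. Q = st P (a finite type); the partition Q = Q0 ⊔ Q1
   is encoded by the output map [out]: Q1 = {q | out q}, Q0 = {q | ~~ out q}. *)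
Record protocol := Protocol {
  st : finType;
  out : st -> bool;
  q_init : st;
  delta : st -> st -> {set st * st};
  delta_nonempty : forall q1 q2, delta q1 q2 != set0
}.

Definition deterministic (P : protocol) : Prop :=
  forall q1 q2 : st P, #|delta q1 q2| = 1.

Definition config (P : protocol) (n : nat) := {ffun 'I_n -> st P}.

Definition init_config (P : protocol) (n : nat) : config P n :=
  [ffun _ => q_init P].

Definition transition (P : protocol) (n : nat) (C1 C2 : config P n) : Prop :=
  exists i j : 'I_n, [/\ i != j,
    (C2 i, C2 j) \in delta (C1 i) (C1 j) &
    forall k, k != i -> k != j -> C2 k = C1 k].

Inductive reachable (P : protocol) (n : nat) : config P n -> config P n -> Prop :=
| reach_refl C : reachable C C
| reach_step C1 C2 C3 : transition C1 C2 -> reachable C2 C3 -> reachable C1 C3.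

Definition execution (P : protocol) (n : nat) (E : nat -> config P n) : Prop :=
  E 0 = init_config P n /\ forall i, transition (E i) (E i.+1).

Definition occurs_inf_often (P : protocol) (n : nat) (E : nat -> config P n)
  (C : config P n) : Prop := forall N, exists i, N <= i /\ E i = C.

Definition fair (P : protocol) (n : nat) (E : nat -> config P n) : Prop :=
  forall C D, occurs_inf_often E C -> reachable C D -> occurs_inf_often E D.

Definition all_out (P : protocol) (n : nat) (b : bool) (C : config P n) : Prop :=
  forall k : 'I_n, out (C k) = b.

Definition computes_1aware (P : protocol) (R : nat -> bool) : Prop :=
  forall n, 0 < n ->
    (R n = false -> forall C, reachable (init_config P n) C -> all_out false C) /\
    (R n = true -> forall E : nat -> config P n, execution E -> fair E ->
        exists i0, forall i, i0 <= i -> all_out true (E i)).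

(* Binary representation of n (no leading zeros; 0 is written "0"),
   least significant digit first. *)
Definition bin_digits (n : nat) : seq nat :=
  [seq (n %/ 2 ^ i) %% 2 | i <- iota 0 (trunc_log 2 n).+1].

Definition ones_bin (n : nat) : nat := count (pred1 1) (bin_digits n).
Definition zeros_bin (n : nat) : nat := count (pred1 0) (bin_digits n).

Definition threshold (d : nat) : nat -> bool := fun n => d <= n.

(* Main.v *)
Require Import Defs.
From mathcomp Require Import all_boot.
From mathcomp Require Import zify.
From Stdlib Require Import Classical.
Set Implicit Arguments. Unset Strict Implicit. Unset Printing Implicit Defensive.

Definition dig (x i : nat) := x %/ 2 ^ i %% 2.
Definition cnt1 (x m : nat) := count (pred1 1) [seq dig x i | i <- iota 0 m].

Lemma ones_cnt1 x : ones_bin x = cnt1 x (trunc_log 2 x).+1.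
Proof. by []. Qed.

Lemma cnt1_ext x m k : x < 2 ^ m -> cnt1 x (m + k) = cnt1 x m.
Proof.
move=> hx; rewrite /cnt1 iotaD map_cat count_cat /=.
have -> : count (pred1 1) [seq dig x i | i <- iota m k] = 0; last by rewrite addn0.
apply/eqP; rewrite -leqn0 leqNgt -has_count; apply/hasPn => v /mapP [i].
rewrite mem_iota => /andP [hi _] ->; rewrite /dig divn_small //.
apply: (leq_trans hx); by rewrite leq_exp2l.
Qed.

Lemma cnt1_ones y m : y < 2 ^ m -> cnt1 y m = ones_bin y.
Proof.
move=> hy; rewrite ones_cnt1.
have h2 := @trunc_log_ltn 2 y isT.
by rewrite -(cnt1_ext (trunc_log 2 y).+1 hy) addnC (cnt1_ext m h2).
Qed.

Lemma dig_add y m i : i < m -> dig (y + 2 ^ m) i = dig y i.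
Proof.
move=> him; rewrite /dig.
have -> : 2 ^ m = 2 ^ (m - i).-1 * 2 * 2 ^ i.
  by rewrite -expnSr prednK ?subn_gt0 // -expnD subnK // ltnW.
rewrite divnDMl ?expn_gt0 //.
by rewrite addnC modnMDl.
Qed.

Lemma cnt1_top x m : 2 ^ m <= x < 2 ^ m.+1 -> cnt1 x m.+1 = (cnt1 (x - 2 ^ m) m).+1.
Proof.
move=> /andP [h1 h2]; rewrite /cnt1.
have -> : iota 0 m.+1 = iota 0 m ++ [:: m] by rewrite -addn1 iotaD.
rewrite map_cat count_cat /=.
have -> : dig x m = 1.
  rewrite /dig -(subnK h1) addnC -{1}(mul1n (2 ^ m)) divnMDl ?expn_gt0 //.
  rewrite divn_small //; rewrite expnS in h2; lia.
rewrite eqxx addn1; congr (_.+1); congr (count _ _).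
apply/eq_in_map => i; rewrite mem_iota => /andP [_ hi].
by rewrite -{1}(subnK h1) dig_add.
Qed.

Lemma ones_top y m : 2 ^ m <= y < 2 ^ m.+1 -> ones_bin y = (ones_bin (y - 2 ^ m)).+1.
Proof.
move=> h; have /andP [h1 h2] := h.
rewrite -(cnt1_ones h2) cnt1_top // cnt1_ones //; rewrite expnS in h2; lia.
Qed.

Lemma ones0 : ones_bin 0 = 0.
Proof. by rewrite /ones_bin /bin_digits trunc_log0. Qed.

Lemma ones_step x : 0 < x -> ones_bin x = (ones_bin (x - 2 ^ trunc_log 2 x)).+1.
Proof.
move=> hx; apply: ones_top; by rewrite trunc_logP // trunc_log_ltn.
Qed.

Lemma ones_compl m x : x < 2 ^ m -> ones_bin x + ones_bin (2 ^ m - 1 - x) = m.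
Proof.
elim: m x => [|m IH] x hx.
  by have -> : x = 0 by rewrite expn0 in hx; lia.
have e2 : 2 ^ m.+1 = 2 ^ m + 2 ^ m by rewrite expnS; lia.
have p2 : 0 < 2 ^ m by rewrite expn_gt0.
case: (leqP (2 ^ m) x) => hxm.
  have h := IH (x - 2 ^ m) ltac:(lia).
  rewrite (@ones_top x m); last by lia.
  have -> : 2 ^ m.+1 - 1 - x = 2 ^ m - 1 - (x - 2 ^ m) by lia.
  lia.
have h := IH x hxm.
rewrite (@ones_top (2 ^ m.+1 - 1 - x) m); last by lia.
have -> : 2 ^ m.+1 - 1 - x - 2 ^ m = 2 ^ m - 1 - x by lia.
lia.
Qed.

Lemma count01 (s : seq nat) : all (fun v => v < 2) s ->
  count (pred1 0) s + count (pred1 1) s = size s.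
Proof.
elim: s => //= v s IH /andP [hv hs]; rewrite -(IH hs).
case: v hv => [|[|v]] //= _; lia.
Qed.

Lemma zeros_ones x : zeros_bin x + ones_bin x = (trunc_log 2 x).+1.
Proof.
rewrite /zeros_bin /ones_bin count01 /bin_digits ?size_map ?size_iota //.
by apply/allP => v /mapP [i _ ->]; rewrite ltn_mod.
Qed.


Section Gen.
Variables (S : finType) (out : S -> bool) (qi : S) (df : S -> S -> S * S).

Lemma df_ne a b : [set df a b] != set0.
Proof. by apply/set0Pn; exists (df a b); rewrite in_set1. Qed.

Definition mkP : protocol := @Protocol S out qi (fun a b => [set df a b]) df_ne.

Lemma mkP_det : deterministic mkP.
Proof. by move=> a b; rewrite /= cards1. Qed.

Definition upd n (C : config mkP n) (i j : 'I_n) (p : S * S) : config mkP n :=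
  [ffun k => if k == i then p.1 else if k == j then p.2 else C k].

Lemma step_upd n (C : config mkP n) i j : i != j ->
  transition C (upd C i j (df (C i) (C j))).
Proof.
move=> hij; exists i, j; split => //.
  by rewrite /upd !ffunE eqxx eq_sym (negbTE hij) eqxx in_set1 -surjective_pairing.
by move=> k hi hj; rewrite /upd ffunE (negbTE hi) (negbTE hj).
Qed.

Lemma trans_inv n (C1 C2 : config mkP n) : transition C1 C2 ->
  exists i j, [/\ i != j, (C2 i, C2 j) = df (C1 i) (C1 j) &
    forall k, k != i -> k != j -> C2 k = C1 k].
Proof.
by move=> [i [j [hij h hk]]]; exists i, j; split => //; move: h; rewrite in_set1 => /eqP.
Qed.

Lemma sum_change n (C1 C2 : config mkP n) i j (f : S -> nat) : i != j ->
  (forall k, k != i -> k != j -> C2 k = C1 k) ->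
  \sum_k f (C2 k) + f (C1 i) + f (C1 j) = \sum_k f (C1 k) + f (C2 i) + f (C2 j).
Proof.
move=> hij hk.
have e1 : forall D : config mkP n, \sum_k f (D k) = f (D i) + f (D j) + \sum_(k | (k != i) && (k != j)) f (D k).
  move=> D; rewrite (bigD1 i) //= (bigD1 j) //=; [by rewrite addnA | by rewrite eq_sym].
rewrite (e1 C1) (e1 C2).
have -> : \sum_(k | (k != i) && (k != j)) f (C2 k) = \sum_(k | (k != i) && (k != j)) f (C1 k).
  apply: eq_bigr => k /andP [hi hj]; by rewrite hk.
lia.
Qed.

Lemma sum_ge2 n (g : 'I_n -> nat) i j : i != j -> g i + g j <= \sum_k g k.
Proof.
move=> hij; rewrite (bigD1 i) //= (bigD1 j) /=; [lia | by rewrite eq_sym].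
Qed.

Lemma sum_ge3 n (g : 'I_n -> nat) i j k : i != j -> i != k -> j != k ->
  g i + g j + g k <= \sum_l g l.
Proof.
move=> hij hik hjk; rewrite (bigD1 i) //= (bigD1 j) /=; last by rewrite eq_sym.
rewrite (bigD1 k) /=; first lia.
by rewrite eq_sym hik eq_sym hjk.
Qed.

Lemma sum_le1 n (b : 'I_n -> bool) : (forall k1 k2, b k1 -> b k2 -> k1 = k2) ->
  \sum_k (b k : nat) <= 1.
Proof.
move=> h; case: (pickP b) => [k0 hk0|hn].
  rewrite (bigD1 k0) //= hk0 big1 // => k hk.
  case hb: (b k) => //; by move: hk; rewrite (h _ _ hb hk0) eqxx.
by rewrite big1 // => k _; rewrite hn.
Qed.

Lemma reach_trans n (A B C : config mkP n) : reachable A B -> reachable B C -> reachable A C.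
Proof. elim=> // X Y Z hXY _ IH hZC; apply: reach_step hXY (IH hZC). Qed.

Lemma reach1 n (A B : config mkP n) : transition A B -> reachable A B.
Proof. move=> h; apply: reach_step h (reach_refl _). Qed.

Lemma reach_inv n (I : config mkP n -> Prop) :
  (forall A B, I A -> transition A B -> I B) ->
  forall A B, reachable A B -> I A -> I B.
Proof. move=> hI A B; elim=> // X Y Z hXY _ IH hX; apply: IH; exact: hI hX hXY. Qed.

Lemma not_inf n (E : nat -> config mkP n) (l : seq (config mkP n)) :
  (forall C, C \in l -> ~ occurs_inf_often E C) ->
  exists N, forall i, N <= i -> E i \notin l.
Proof.
elim: l => [|C l IH] h; first by exists 0.
have [N1 h1] : exists N, forall i, N <= i -> E i <> C.
  have := h C (mem_head _ _); rewrite /occurs_inf_often => hn.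
  apply: NNPP => hc; apply: hn => N; apply: NNPP => hc2; apply: hc; exists N.
  move=> i hi hEi; apply: hc2; by exists i.
have [N2 h2] := IH (fun C' hC' => h C' (@mem_behead _ (C :: l) _ hC')).
exists (maxn N1 N2) => i hi; rewrite in_cons negb_or; apply/andP; split.
  apply/eqP; apply: h1; lia.
apply: h2; lia.
Qed.

Lemma fair_lemma n (E : nat -> config mkP n) (G : config mkP n -> Prop) :
  execution E -> fair E ->
  (forall C, reachable (init_config mkP n) C -> exists D, reachable C D /\ G D) ->
  (forall A B, G A -> transition A B -> G B) ->
  exists i0, forall i, i0 <= i -> G (E i).
Proof.
move=> [hE0 hEs] hf hreach hG.
have hr : forall i, reachable (init_config mkP n) (E i).
  elim=> [|i IH]; first by rewrite hE0; exact: reach_refl.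
  apply: reach_trans IH (reach1 (hEs i)).
have [C hC] : exists C, occurs_inf_often E C.
  apply: NNPP => hn.
  have [N hN] := @not_inf n E (enum {: config mkP n}) (fun C _ hC => hn (ex_intro _ C hC)).
  by move: (hN N (leqnn N)); rewrite mem_enum.
have [i0 [_ hi0]] := hC 0.
have [D [hCD hD]] := hreach C (eq_ind _ _ (hr i0) _ hi0).
have [i1 [_ hi1]] := hf C D hC hCD 0.
exists i1 => i hi; elim: i hi => [|i IH] hi.
  have h0 : i1 = 0 by lia.
  by move: hD; rewrite -hi1 h0.
case: (ltnP i1 i.+1) => h.
  apply: hG (IH _) (hEs i); lia.
have h0 : i.+1 = i1 by lia.
by rewrite h0 hi1.
Qed.

Lemma upd_i n (C : config mkP n) i j p : upd C i j p i = p.1.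
Proof. by rewrite /upd ffunE eqxx. Qed.
Lemma upd_j n (C : config mkP n) i j p : i != j -> upd C i j p j = p.2.
Proof. by move=> h; rewrite /upd ffunE eq_sym (negbTE h) eqxx. Qed.
Lemma upd_k n (C : config mkP n) i j p k : k != i -> k != j -> upd C i j p k = C k.
Proof. by move=> h1 h2; rewrite /upd ffunE (negbTE h1) (negbTE h2). Qed.

Lemma upd_sum n (C : config mkP n) i j (f : S -> nat) : i != j ->
  \sum_k f (upd C i j (df (C i) (C j)) k) + f (C i) + f (C j) =
  \sum_k f (C k) + f (df (C i) (C j)).1 + f (df (C i) (C j)).2.
Proof.
move=> hij; rewrite (sum_change f hij (C1 := C) (C2 := upd C i j (df (C i) (C j)))).
  by rewrite upd_i upd_j.
by move=> k h1 h2; rewrite upd_k.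
Qed.

End Gen.


Section Proto.
Variables (ab : bool) (K' r d P : nat).
Local Notation K := K'.+1.

Definition st0 : finType := (('I_K'.+1 + 'I_r.+1) + bool)%type.
Definition Tok (j : 'I_K'.+1) : st0 := inl (inl j).
Definition Lead (i : 'I_r.+1) : st0 := inl (inr i).
Definition Zero : st0 := inr false.
Definition Done : st0 := inr true.

Definition fstep (x : nat) := x - 2 ^ trunc_log 2 x.
Definition s (i : nat) := iter i fstep P.
Definition a (i : nat) := trunc_log 2 (s i).
Definition w (i : nat) := if ab then d - s i else 2 ^ K + s i.
Definition cc := if ab then 0 else P.
Definition trigany (i : nat) := d + cc <= w i.
Definition trig (i j : nat) := d + cc <= w i + 2 ^ j.

Definition lt_ (i : 'I_r.+1) (j : 'I_K'.+1) : st0 * st0 :=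
  if trig i j then (Done, Done)
  else if ab && (j == a i :> nat) && (i < r) then (Lead (inord i.+1), Zero)
  else (Lead i, Tok j).
Definition lz_ (i : 'I_r.+1) : st0 * st0 :=
  if trigany i then (Done, Done)
  else if ~~ ab && (i < r) then (Lead (inord i.+1), Tok (inord (a i)))
  else (Lead i, Zero).

Definition df (p q : st0) : st0 * st0 :=
  match p, q with
  | inr true, _ => (Done, Done)
  | _, inr true => (Done, Done)
  | inl (inl j1), inl (inl j2) =>
      if j1 == j2 then (if j1 < K' then (Tok (inord j1.+1), Zero) else (Lead ord0, Zero))
      else (p, q)
  | inl (inr _), inl (inr _) => (Done, Done)
  | inl (inr i), inl (inl j) => lt_ i j
  | inl (inl j), inl (inr i) => ((lt_ i j).2, (lt_ i j).1)
  | inl (inr i), inr false => lz_ i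
  | inr false, inl (inr i) => ((lz_ i).2, (lz_ i).1)
  | _, _ => (p, q)
  end.

Definition outf (q : st0) := q == Done.
Definition PP := mkP outf (Tok ord0) df.

Definition tokF (F : nat -> nat) (q : st0) := if q is inl (inl j) then F (nat_of_ord j) else 0.
Definition lv (q : st0) := if q is inl (inr i) then w i else 0.
Definition vq (q : st0) := tokF (fun j => 2 ^ j) q + lv q.
Definition isL (q : st0) : bool := if q is inl (inr _) then true else false.
Definition isTk (q : st0) : bool := if q is inl (inl _) then true else false.
Definition gL (q : st0) := if q is inl (inr i) then (nat_of_ord i).+1 else 0.

Hypothesis Hs : forall i, i < r -> 0 < s i.
Hypothesis Hr : s r = 0.
Hypothesis HP : P < 2 ^ K.
Hypothesis Hd : if ab then d = 2 ^ K + P else d + P = 2 ^ K.+1.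

Lemma s_le i : s i <= P.
Proof.
elim: i => [//|i IH]; rewrite /s iterS -/(s i) /fstep; lia.
Qed.

Lemma s_step i : 0 < s i -> [/\ s i.+1 = s i - 2 ^ a i, 2 ^ a i <= s i & s i < 2 ^ (a i).+1].
Proof.
move=> h; split; first by [].
  exact: trunc_logP.
exact: trunc_log_ltn.
Qed.

Lemma a_lt i : 0 < s i -> a i < K'.+1.
Proof.
move=> h; have [_ h1 _] := s_step h.
have h2 : 2 ^ a i < 2 ^ K by have := s_le i; lia.
by rewrite ltn_exp2l in h2.
Qed.

Lemma w_ge i : 2 ^ K <= w i.
Proof. rewrite /w; have := s_le i; have hp := HP; case: ab Hd => hd; rewrite ?expnS in hd hp *; lia. Qed.

Lemma w0 : w 0 = 2 ^ K + cc.
Proof. rewrite /w /cc /s /=; have hp := HP; case: ab Hd => hd; rewrite ?expnS in hd hp *; lia. Qed.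

Lemma dK : 2 ^ K <= d.
Proof. have hp := HP; case: ab Hd => hd; rewrite ?expnS in hd hp *; lia. Qed.

Lemma dK2 : d + cc <= 2 ^ K.+1.
Proof. rewrite /cc expnS; have hp := HP; case: ab Hd => hd; rewrite ?expnS in hd hp *; lia. Qed.

Lemma ndone1 q : df Done q = (Done, Done).
Proof. by []. Qed.
Lemma ndone2 p : df p Done = (Done, Done).
Proof. by case: p => [[]|[]]. Qed.

Definition isD (q : st0) := q == Done.

Lemma loc p q : ~~ isD p -> ~~ isD q ->
  isD (df p q).1 || isD (df p q).2 ||
  (vq (df p q).1 + vq (df p q).2 + cc * (isL p + isL q) ==
   vq p + vq q + cc * (isL (df p q).1 + isL (df p q).2)).
Proof.
case: p => [[j1|i1]|[]] //; case: q => [[j2|i2]|[]] // _ _.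
- rewrite /df; case: eqP => [<-|]; last by rewrite /= eqxx ?orbT.
  case: ifP => hj.
    by rewrite /vq /= inordK // expnS; apply/eqP; lia.
  have hk : nat_of_ord j1 = K' by have := ltn_ord j1; lia.
  rewrite /vq /= w0 hk expnS; apply/eqP; lia.
-  rewrite /df /lt_; case: ifP => // ht; case: ifP => [/andP [/andP [hab /eqP hj] hi]|_];
    last by rewrite /= eqxx ?orbT.
  have hs := Hs hi; have [e1 e2 e3] := s_step hs.
  rewrite /vq /= inordK // /w /cc hab e1 hj; have := s_le i2; move: Hd; rewrite hab => hd hle.
  apply/eqP; lia.
- by rewrite /df /= eqxx ?orbT.
-  rewrite /df /lt_; case: ifP => // ht; case: ifP => [/andP [/andP [hab /eqP hj] hi]|_];
    last by rewrite /= eqxx ?orbT.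
  have hs := Hs hi; have [e1 e2 e3] := s_step hs.
  rewrite /vq /= inordK // /w /cc hab e1 hj; have := s_le i1; move: Hd; rewrite hab => hd hle.
  apply/eqP; lia.
-  rewrite /df /lz_; case: ifP => // ht; case: ifP => [/andP [hab hi]|_];
    last by rewrite /= eqxx ?orbT.
  have hs := Hs hi; have [e1 e2 e3] := s_step hs.
  rewrite /vq /= !inordK ?a_lt // /w /cc e1; move: Hd; rewrite (negbTE hab) => hd.
  apply/eqP; lia.
- by rewrite /df /= eqxx ?orbT.
-  rewrite /df /lz_; case: ifP => // ht; case: ifP => [/andP [hab hi]|_];
    last by rewrite /= eqxx ?orbT.
  have hs := Hs hi; have [e1 e2 e3] := s_step hs.
  rewrite /vq /= !inordK ?a_lt // /w /cc e1; move: Hd; rewrite (negbTE hab) => hd.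
  apply/eqP; lia.
- by rewrite /df /= eqxx ?orbT.
Qed.


Lemma loc_safe p q : ~~ isD p -> ~~ isD q -> ~~ (isL p && isL q) ->
  vq p + vq q < d + cc ->
  [&& ~~ isD (df p q).1, ~~ isD (df p q).2 &
   (isL (df p q).1 + isL (df p q).2 <= isL p + isL q) ||
   ((p == Tok ord_max) && (q == Tok ord_max))].
Proof.
case: p => [[j1|i1]|[]] //; case: q => [[j2|i2]|[]] // _ _ hL hv.
- rewrite /df; case: eqP => [<-|]; last by rewrite /=.
  case: ifP => hj //=.
  have hk : j1 = ord_max by apply/val_inj; have := ltn_ord j1; rewrite /=; lia.
  by rewrite hk eqxx.
- rewrite /df /lt_; case: ifP => ht.
    by move: hv; rewrite /trig /vq /= in ht *; lia.
  by case: ifP.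
- rewrite /df /lt_; case: ifP => ht.
    by move: hv; rewrite /trig /vq /= in ht *; lia.
  by case: ifP.
- rewrite /df /lz_; case: ifP => ht.
    by move: hv; rewrite /trigany /vq /= in ht *; lia.
  by case: ifP.
- rewrite /df /lz_; case: ifP => ht.
    by move: hv; rewrite /trigany /vq /= in ht *; lia.
  by case: ifP.
Qed.

Section Cfg.
Variable n : nat.
Implicit Types C : config PP n.

Definition Phi C := \sum_k vq (C k).
Definition NL C := \sum_k (isL (C k) : nat).
Definition NT C := \sum_k (isTk (C k) : nat).
Definition G C := \sum_k gL (C k).
Definition HD C := [exists k, isD (C k)].

Lemma exL (b : 'I_n -> bool) : 0 < \sum_k (b k : nat) -> exists k, b k.
Proof.
move=> h; case: (pickP b) => [k hk|hn]; first by exists k.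
by move: h; rewrite big1 // => k _; rewrite hn.
Qed.

Lemma HD_step C1 C2 : HD C1 -> transition C1 C2 -> HD C2.
Proof.
move=> /existsP [k hkD] /trans_inv [i [j [hij hp hk]]]; apply/existsP.
case: (eqVneq k i) => [ek|nki].
  exists i; move: hp; rewrite -ek (eqP hkD) ndone1 => -[-> _]; done.
case: (eqVneq k j) => [ek|nkj].
  exists j; move: hp; rewrite -ek (eqP hkD) ndone2 => -[_ ->]; done.
by exists k; rewrite hk.
Qed.

Lemma inv_step C1 C2 : (HD C1 \/ Phi C1 = n + cc * NL C1) -> transition C1 C2 ->
  (HD C2 \/ Phi C2 = n + cc * NL C2).
Proof.
move=> hI ht; case: (boolP (HD C1)) => [hd|hnd]; first by left; exact: HD_step hd ht.
case: hI => [h|hI]; first by rewrite h in hnd.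
move: ht => /trans_inv [i [j [hij hp hk]]].
have hi : ~~ isD (C1 i) by apply: contra hnd => h; apply/existsP; exists i.
have hj : ~~ isD (C1 j) by apply: contra hnd => h; apply/existsP; exists j.
have := loc hi hj; rewrite -hp /= => /orP [/orP [h|h]|/eqP e].
- by left; apply/existsP; exists i.
- by left; apply/existsP; exists j.
right.
have e1 : Phi C2 + vq (C1 i) + vq (C1 j) = Phi C1 + vq (C2 i) + vq (C2 j) := sum_change vq hij hk.
have e2 : NL C2 + isL (C1 i) + isL (C1 j) = NL C1 + isL (C2 i) + isL (C2 j) :=
  sum_change (fun q => isL q : nat) hij hk.
have e' : vq (C2 i) + vq (C2 j) + cc * (isL (C1 i) + isL (C1 j)) = vq (C1 i) + vq (C1 j) + cc * (isL (C2 i) + isL (C2 j)) := e.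
move: e' e1 e2 hI; clear e; generalize (Phi C1) (Phi C2) (NL C1) (NL C2) (vq (C1 i)) (vq (C1 j)) (vq (C2 i)) (vq (C2 j)) (isL (C1 i) : nat) (isL (C1 j) : nat) (isL (C2 i) : nat) (isL (C2 j) : nat) => *; nia.
Qed.

Lemma reach_inv' C D : reachable C D -> (HD C \/ Phi C = n + cc * NL C) ->
  (HD D \/ Phi D = n + cc * NL D).
Proof.
move=> h; apply: (reach_inv (I := fun C => HD C \/ Phi C = n + cc * NL C)) h => A B.
exact: inv_step.
Qed.

Lemma sinv_step C1 C2 : n < d ->
  [/\ ~~ HD C1, NL C1 <= 1 & Phi C1 = n + cc * NL C1] -> transition C1 C2 ->
  [/\ ~~ HD C2, NL C2 <= 1 & Phi C2 = n + cc * NL C2].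
Proof.
move=> hn [hnd hL hP] ht.
have := inv_step (or_intror hP) ht.
move: ht => /trans_inv [i [j [hij hp hk]]].
have hi : ~~ isD (C1 i) by apply: contra hnd => h; apply/existsP; exists i.
have hj : ~~ isD (C1 j) by apply: contra hnd => h; apply/existsP; exists j.
have hPn : Phi C1 <= n + cc by rewrite hP; nia.
have hLL : ~~ (isL (C1 i) && isL (C1 j)).
  apply/negP => /andP [h1 h2]; have := sum_ge2 (fun k => isL (C1 k) : nat) hij.
  rewrite h1 h2 -/(NL C1); lia.
have hv : vq (C1 i) + vq (C1 j) < d + cc.
  have := sum_ge2 (fun k => vq (C1 k)) hij; rewrite -/(Phi C1); lia.
have := loc_safe hi hj hLL hv; rewrite -hp /= => /and3P [h1 h2 h3].
have hnd2 : ~~ HD C2.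
  apply/existsP => -[k hkD]; case: (eqVneq k i) => [ek|nki]; first by rewrite -ek hkD in h1.
  case: (eqVneq k j) => [ek|nkj]; first by rewrite -ek hkD in h2.
  by apply: (negP hnd); apply/existsP; exists k; rewrite -(hk _ nki nkj).
case=> [h|hP2]; first by rewrite h in hnd2.
split; [exact: hnd2 | | exact: hP2].
have e2 : NL C2 + isL (C1 i) + isL (C1 j) = NL C1 + isL (C2 i) + isL (C2 j) :=
  sum_change (fun q => isL q : nat) hij hk.
case/orP: h3 => [h3|/andP [/eqP e3 /eqP e4]].
  have h3' : isL (C2 i) + isL (C2 j) <= isL (C1 i) + isL (C1 j) := h3.
  move: e2 h3' hL; generalize (NL C1) (NL C2) (isL (C1 i):nat) (isL (C1 j):nat) (isL (C2 i):nat) (isL (C2 j):nat).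
  clear; lia.
have hL0 : NL C1 = 0.
  apply/eqP; rewrite -leqn0 leqNgt; apply/negP => /exL [k hkL].
  have nki : k != i by apply: contraTneq hkL => ->; rewrite e3.
  have nkj : k != j by apply: contraTneq hkL => ->; rewrite e4.
  have nik : i != k by rewrite eq_sym.
  have njk : j != k by rewrite eq_sym.
  have := sum_ge3 (fun l => vq (C1 l)) hij nik njk.
  rewrite -/(Phi C1) e3 e4 /vq /=.
  case: (C1 k) hkL => [[?|ik]|[]] //= _.
  have := w_ge ik; have := dK2; rewrite !expnS.
  move: hPn hn; generalize (Phi C1) (w ik) (2 ^ K'); clear; lia.
move: hp; rewrite e3 e4 /df /= eq_refl ltnn.
case=> h2i h2j; move: e2; rewrite hL0 h2i h2j e3 e4 /=.
generalize (NL C2); clear; lia.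
Qed.


Definition T C := \sum_k tokF (fun j => 2 ^ j) (C k).
Definition LV C := \sum_k lv (C k).
Definition mu C := NT C + n.+1 * (r.+1 - G C).

Lemma Phi_split C : Phi C = T C + LV C.
Proof. by rewrite /Phi /T /LV -big_split. Qed.

Lemma tok_dec C (F : nat -> nat) :
  \sum_k tokF F (C k) = \sum_(t < K'.+1) F t * \sum_k (C k == Tok t : nat).
Proof.
have pw : forall q, tokF F q = \sum_(t < K'.+1) F t * (q == Tok t : nat).
  move=> q; case hq: (isTk q).
    case: q hq => [[j|i]|[]] // _.
    rewrite (bigD1 j) //= eqxx muln1 big1 ?addn0 // => t ht.
    rewrite (_ : (_ == _) = false) ?muln0 //; apply/eqP => -[h]; by rewrite h eqxx in ht.
  rewrite big1; first by case: q hq => [[]|].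
  move=> t _; rewrite (_ : (_ == _) = false) ?muln0 //; apply/eqP => h; by rewrite h in hq.
rewrite (eq_bigr _ (fun k _ => pw (C k))) exchange_big /=.
by apply: eq_bigr => t _; rewrite big_distrr.
Qed.

Lemma pow_sum m b : \sum_(t < m) ((t < b) * 2 ^ t) < 2 ^ minn m b.
Proof.
elim: m => [|m IH]; first by rewrite big_ord0 expn_gt0.
rewrite big_ord_recr /=; case: (ltnP m b) => hmb.
  have -> : minn m.+1 b = m.+1 by lia.
  have e : minn m b = m by lia.
  by rewrite e in IH; rewrite mul1n expnS mul2n -addnn ltn_add2r.
have -> : minn m.+1 b = b by lia.
have e : minn m b = b by lia.
by rewrite e in IH; rewrite mul0n addn0.
Qed.

Lemma tok_bound C b : (forall k1 k2 t, C k1 = Tok t -> C k2 = Tok t -> k1 = k2) ->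
  (forall k (t : 'I_K'.+1), C k = Tok t -> t < b) -> T C < 2 ^ b.
Proof.
move=> hu hb; rewrite /T tok_dec.
apply: (@leq_ltn_trans (\sum_(t < K'.+1) ((t < b) * 2 ^ t))); last first.
  by apply: (leq_trans (pow_sum _ _)); rewrite leq_exp2l // geq_minr.
apply: leq_sum => t _.
have h1 : \sum_k (C k == Tok t : nat) <= 1.
  apply: sum_le1 => k1 k2 /eqP h1 /eqP h2; exact: hu h1 h2.
case: (ltnP t b) => htb; first by rewrite mul1n -[X in _ <= X]muln1 leq_mul2l h1 orbT.
rewrite big1 ?muln0 // => k _; case: eqP => // /hb; lia.
Qed.

Lemma NT_bound C : (forall k1 k2 t, C k1 = Tok t -> C k2 = Tok t -> k1 = k2) ->
  NT C <= K'.+1.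
Proof.
move=> hu; have -> : NT C = \sum_k tokF (fun _ => 1) (C k).
  by apply: eq_bigr => k _; case: (C k) => [[]|[]].
rewrite tok_dec; rewrite -[X in _ <= X]card_ord -sum1_card.
apply: leq_sum => t _; rewrite mul1n; apply: sum_le1 => k1 k2 /eqP h1 /eqP h2; exact: hu h1 h2.
Qed.

Lemma done_at C i j : i != j -> isD (df (C i) (C j)).1 -> exists C', reachable C C' /\ HD C'.
Proof.
move=> hij hD; exists (upd C i j (df (C i) (C j))); split.
  exact: reach1 (step_upd _ hij).
by apply/existsP; exists i; rewrite upd_i.
Qed.

Lemma other (l : 'I_n) : 1 < n -> exists k : 'I_n, k != l.
Proof.
move=> hn; case: (eqVneq (nat_of_ord l) 0) => h.
  by exists (Ordinal hn); apply/eqP => e; move: h; rewrite -e.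
have h0 : 0 < n by lia.
by exists (Ordinal h0); apply/eqP => e; move: h; rewrite -e.
Qed.

Lemma upd_sumP C i j (f : st0 -> nat) : i != j ->
  \sum_k f (upd C i j (df (C i) (C j)) k) + f (C i) + f (C j) =
  \sum_k f (C k) + f (df (C i) (C j)).1 + f (df (C i) (C j)).2.
Proof. exact: (@upd_sum _ outf (Tok ord0) df n C i j f). Qed.

Lemma nD_of C : ~~ HD C -> forall k, ~~ isD (C k).
Proof. by move=> h k; apply: contra h => hk; apply/existsP; exists k. Qed.

Lemma progress C : d <= n -> ~~ HD C -> Phi C = n + cc * NL C ->
  exists C', reachable C C' /\ (HD C' \/ mu C' < mu C).
Proof.
move=> hn hnd hP.
have hdK := dK.
have n2 : 1 < n by move: hdK; rewrite expnS; have := expn_gt0 2 K'; lia.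
have nD := nD_of hnd.
case: (boolP [exists i, exists j, (i != j) && isL (C i) && isL (C j)]) =>
  [/existsP [i /existsP [j /andP [/andP [hij h1] h2]]]|hA].
  have [C' [hr hd]] : exists C', reachable C C' /\ HD C'.
    apply: (done_at hij); move: h1 h2.
    by case: (C i) => [[?|?]|[]] //; case: (C j) => [[?|?]|[]].
  by exists C'; split => //; left.
have hLu : forall k1 k2, isL (C k1) -> isL (C k2) -> k1 = k2.
  move=> k1 k2 h1 h2; apply/eqP; apply: contraNT hA => hne.
  by apply/existsP; exists k1; apply/existsP; exists k2; rewrite hne h1 h2.
case: (boolP [exists i, exists j, (i != j) && isTk (C i) && (C i == C j)]) =>
  [/existsP [i /existsP [j /andP [/andP [hij hTi] /eqP heq]]]|hB].
  case Ci: (C i) hTi heq => [[t|?]|[]] // _ heq.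
  have eT : NT (upd C i j (df (C i) (C j))) + isTk (C i) + isTk (C j) =
    NT C + isTk (df (C i) (C j)).1 + isTk (df (C i) (C j)).2 := @upd_sumP C i j (fun q => isTk q : nat) hij.
  have eG : G (upd C i j (df (C i) (C j))) + gL (C i) + gL (C j) =
    G C + gL (df (C i) (C j)).1 + gL (df (C i) (C j)).2 := @upd_sumP C i j gL hij.
  case: (ltnP t K') => htK.
    have hdf : df (C i) (C j) = (Tok (inord t.+1), Zero) by rewrite Ci -heq /df eqxx htK.
    exists (upd C i j (df (C i) (C j))); split; first exact: reach1 (step_upd _ hij).
    right; move: eT eG; rewrite hdf -heq Ci /= /mu.
    generalize (NT (upd C i j (Tok (inord t.+1), Zero))) (G (upd C i j (Tok (inord t.+1), Zero))) (NT C) (G C).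
    move=> *; nia.
  have hdf : df (C i) (C j) = (Lead ord0, Zero) by rewrite Ci -heq /df eqxx ltnNge htK.
  case: (boolP [exists k, isL (C k)]) => [/existsP [k hk]|hnl].
    have nki : k != i by apply: contraTneq hk => ->; rewrite Ci.
    have nkj : k != j by apply: contraTneq hk => ->; rewrite -heq.
    set C' := upd C i j (df (C i) (C j)).
    have [C'' [hr hd]] : exists C'', reachable C' C'' /\ HD C''.
      apply: (done_at (i := i) (j := k)); first by rewrite eq_sym.
      rewrite /C' upd_i upd_k // hdf /=; move: hk.
      by case: (C k) => [[?|?]|[]].
    exists C''; split; last by left.
    exact: reach_trans (reach1 (step_upd _ hij)) hr.
  have hG0 : G C = 0.
    apply: big1 => k _; have : ~~ isL (C k) by apply: contra hnl => h; apply/existsP; exists k.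
    by case: (C k) => [[]|[]].
  exists (upd C i j (df (C i) (C j))); split; first exact: reach1 (step_upd _ hij).
  right; move: eT eG; rewrite hdf -heq Ci hG0 /= /mu.
  generalize (NT (upd C i j (Lead ord0, Zero))) (G (upd C i j (Lead ord0, Zero))) (NT C).
  move=> *; nia.
have hTu : forall k1 k2 t, C k1 = Tok t -> C k2 = Tok t -> k1 = k2.
  move=> k1 k2 t h1 h2; apply/eqP; apply: contraNT hB => hne.
  by apply/existsP; exists k1; apply/existsP; exists k2; rewrite hne h1 h2 eqxx.
have hNT := NT_bound hTu.
have hPs := Phi_split C.
have hTK : T C < 2 ^ K'.+1 by apply: (@tok_bound C K'.+1 hTu) => k t _; exact: ltn_ord.
case: (boolP [exists k, isL (C k)]) => [/existsP [l hl]|hnl]; last first.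
  have hnl' : forall k, ~~ isL (C k) by move=> k; apply: contra hnl => h; apply/existsP; exists k.
  have hLV : LV C = 0 by apply: big1 => k _; move: (hnl' k); case: (C k) => [[]|[]].
  have hNL : NL C = 0 by apply: big1 => k _; move: (hnl' k); case: (C k) => [[]|[]].
  move: hP hPs hTK hdK; rewrite hLV hNL; generalize (Phi C) (T C) (2 ^ K'.+1); move=> *; nia.
case Cl: (C l) hl => [[?|i]|[]] // _.
have hoth : forall k, k != l -> ~~ isL (C k).
  move=> k hk; apply/negP => h; have := hLu k l h; rewrite Cl => /(_ (erefl true)) e.
  by rewrite e eqxx in hk.
have hLV : LV C = w i.
  rewrite /LV (bigD1 l) //= Cl big1 ?addn0 // => k hk; move: (hoth k hk).
  by case: (C k) => [[]|[]].
have hNL : NL C = 1.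
  rewrite /NL (bigD1 l) //= Cl big1 ?addn0 // => k hk; move: (hoth k hk).
  by case: (C k) => [[]|[]].
have hG : G C = i.+1.
  rewrite /G (bigD1 l) //= Cl big1 ?addn0 // => k hk; move: (hoth k hk).
  by case: (C k) => [[]|[]].
have hT : T C + w i = n + cc by rewrite -hLV -hPs hP hNL muln1.
case: (boolP (trigany i)) => htr.
  have [k hk] := other l n2.
  have [C' [hr hd]] : exists C', reachable C C' /\ HD C'.
    apply: (done_at (i := l) (j := k)); first by rewrite eq_sym.
    move: (nD k); rewrite Cl; case: (C k) => [[j|?]|[]] //= _.
      rewrite /lt_ ifT //; move: htr; rewrite /trig /trigany; lia.
    by rewrite /lz_ htr.
  by exists C'; split => //; left.
have hsP := s_le i.
have hPd : P <= d by move: Hd HP; case: ab => hd; rewrite ?expnS in hd * => *; lia.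
case hab : ab.
  have hw : w i = d - s i by rewrite /w hab.
  have hcc : cc = 0 by rewrite /cc hab.
  have hsi : 0 < s i by move: htr; rewrite /trigany hw hcc; lia.
  have hir : i < r.
    have := ltn_ord i; rewrite ltnS leq_eqVlt => /orP [/eqP e|//].
    by move: hsi; rewrite e Hr.
  have [e1 e2 e3] := s_step hsi.
  case: (boolP [exists k, exists t : 'I_K'.+1, (C k == Tok t) && (a i <= t)]) =>
    [/existsP [k /existsP [t /andP [/eqP Ck hat]]]|hnt]; last first.
    have : T C < 2 ^ a i.
      apply: (@tok_bound C (a i) hTu) => k t Ck; rewrite ltnNge; apply: contra hnt => h.
      by apply/existsP; exists k; apply/existsP; exists t; rewrite Ck eqxx h.
    move: hT; rewrite hw hcc; lia.
  have hkl : k != l by apply/eqP => e; move: Ck; rewrite e Cl => h; discriminate h.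
  case: (boolP (trig i t)) => htg.
    have [C' [hr hd]] : exists C', reachable C C' /\ HD C'.
      apply: (done_at (i := l) (j := k)); first by rewrite eq_sym.
      by rewrite Cl Ck /= /lt_ htg.
    by exists C'; split => //; left.
  have hta : nat_of_ord t = a i.
    apply/eqP; rewrite eqn_leq hat andbT; apply/negP => hlt.
    move: htg; rewrite /trig hw hcc => /negP; apply.
    have : 2 ^ (a i).+1 <= 2 ^ t by rewrite leq_exp2l // ltnNge; apply/negP.
    lia.
  have hdf : df (C l) (C k) = (Lead (inord i.+1), Zero).
    by rewrite Cl Ck /= /lt_ (negbTE htg) hab hta eqxx hir.
  have hlk : l != k by rewrite eq_sym.
  have eT : NT (upd C l k (df (C l) (C k))) + isTk (C l) + isTk (C k) =
    NT C + isTk (df (C l) (C k)).1 + isTk (df (C l) (C k)).2 := @upd_sumP C l k (fun q => isTk q : nat) hlk.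
  have eG : G (upd C l k (df (C l) (C k))) + gL (C l) + gL (C k) =
    G C + gL (df (C l) (C k)).1 + gL (df (C l) (C k)).2 := @upd_sumP C l k gL hlk.
  exists (upd C l k (df (C l) (C k))); split; first exact: reach1 (step_upd _ hlk).
  right; move: eT eG; rewrite hdf Cl Ck hG /= inordK ?ltnS // /mu.
  generalize (NT (upd C l k (Lead (inord i.+1), Zero))) (G (upd C l k (Lead (inord i.+1), Zero))) (NT C).
  move=> *; nia.
have hw : w i = 2 ^ K'.+1 + s i by rewrite /w hab.
have hcc : cc = P by rewrite /cc hab.
have hd' : d + P = 2 ^ K'.+2 by move: Hd; rewrite hab.
case: (ltnP i r) => hir; last first.
  have ei : nat_of_ord i = r by have := ltn_ord i; lia.
  move: hT hTK hd' HP; rewrite hw hcc ei Hr !expnS => *; lia.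
case: (boolP [exists k, C k == Zero]) => [/existsP [k /eqP Ck]|hnz]; last first.
  have hle : n <= NT C + NL C.
    rewrite -[X in X <= _]card_ord -sum1_card -big_split /=; apply: leq_sum => k _.
    have : C k != Zero by apply: contra hnz => h; apply/existsP; exists k.
    by move: (nD k); case: (C k) => [[j|i0]|[]].
  have := ltn_expl K'.+1 (erefl true : 1 < 2).
  move: hle hNT hd' HP hn; rewrite hNL expnS; lia.
have hkl : k != l by apply/eqP => e; move: Ck; rewrite e Cl => h; discriminate h.
have hlk : l != k by rewrite eq_sym.
have hdf : df (C l) (C k) = (Lead (inord i.+1), Tok (inord (a i))).
  by rewrite Cl Ck /= /lz_ (negbTE htr) hab hir.
have eT : NT (upd C l k (df (C l) (C k))) + isTk (C l) + isTk (C k) =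
  NT C + isTk (df (C l) (C k)).1 + isTk (df (C l) (C k)).2 := @upd_sumP C l k (fun q => isTk q : nat) hlk.
have eG : G (upd C l k (df (C l) (C k))) + gL (C l) + gL (C k) =
  G C + gL (df (C l) (C k)).1 + gL (df (C l) (C k)).2 := @upd_sumP C l k gL hlk.
exists (upd C l k (df (C l) (C k))); split; first exact: reach1 (step_upd _ hlk).
right; move: eT eG; rewrite hdf Cl Ck hG /= inordK ?ltnS // /mu.
generalize (NT (upd C l k (Lead (inord i.+1), Tok (inord (a i))))) (G (upd C l k (Lead (inord i.+1), Tok (inord (a i))))) (NT C).
move=> *; nia.
Qed.

Lemma live C : d <= n -> (HD C \/ Phi C = n + cc * NL C) -> exists D, reachable C D /\ HD D.
Proof.
move=> hn; suff H : forall m C, mu C <= m -> (HD C \/ Phi C = n + cc * NL C) ->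
    exists D, reachable C D /\ HD D by move=> hI; exact: H _ C (leqnn _) hI.
elim=> [|m IH] C0 hm hI.
  case: (boolP (HD C0)) => hd; first by exists C0; split => //; exact: (reach_refl _).
  case: hI => [h|hP]; first by rewrite h in hd.
  case: (progress hn hd hP) => C' [hr [h'|hmu]]; first by exists C'.
  by move: hm hmu; generalize (mu C0) (mu C'); move=> *; lia.
case: (boolP (HD C0)) => hd; first by exists C0; split => //; exact: (reach_refl _).
case: hI => [h|hP]; first by rewrite h in hd.
case: (progress hn hd hP) => C' [hr [h'|hmu]]; first by exists C'.
have hm' : mu C' <= m by move: hm hmu; generalize (mu C0) (mu C'); move=> *; lia.
have [D [hD1 hD2]] := IH C' hm' (reach_inv' hr (or_intror hP)).
by exists D; split => //; exact: reach_trans hr hD1.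
Qed.

Definition ND C := \sum_k (C k != Done : nat).

Lemma spread C : HD C -> exists D, reachable C D /\ (forall k, D k = Done).
Proof.
suff H : forall m C, ND C <= m -> HD C -> exists D, reachable C D /\ (forall k, D k = Done)
  by move=> h; exact: H _ C (leqnn _) h.
elim=> [|m IH] C0 hm /existsP [k hk].
  exists C0; split; first exact: (reach_refl _).
  move=> l; apply/eqP; apply: contraTT hm => hl; rewrite -ltnNge /ND (bigD1 l) //= hl //.
case: (boolP [exists j, C0 j != Done]) => [/existsP [j hj]|hnd]; last first.
  exists C0; split; first exact: (reach_refl _).
  move=> l; apply/eqP; case: (boolP (C0 l == Done)) => // hl; case/negP: hnd; by apply/existsP; exists l.
have hkj : k != j by apply: contraTneq hk => ->; rewrite /isD (negbTE hj).
have e : ND (upd C0 k j (df (C0 k) (C0 j))) + (C0 k != Done) + (C0 j != Done) =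
  ND C0 + ((df (C0 k) (C0 j)).1 != Done) + ((df (C0 k) (C0 j)).2 != Done) :=
  @upd_sumP C0 k j (fun q => q != Done : nat) hkj.
have hdf : df (C0 k) (C0 j) = (Done, Done) by rewrite (eqP hk).
move: e; rewrite hdf (eqP hk) hj /= => e.
have hm' : ND (upd C0 k j (Done, Done)) <= m.
  have e' : ND (upd C0 k j (Done, Done)) + 0 + 1 = ND C0 + 0 + 0 := e.
  move: e' hm; generalize (ND C0) (ND (upd C0 k j (Done, Done))); move=> *; lia.
have hD' : HD (upd C0 k j (Done, Done)) by apply/existsP; exists k; rewrite upd_i.
have [D [h1 h2]] := IH _ hm' hD'.
exists D; split => //; apply: reach_trans h1.
by rewrite -hdf; exact: reach1 (step_upd _ hkj).
Qed.

End Cfg.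

Lemma init_facts n : [/\ ~~ HD (init_config PP n), NL (init_config PP n) = 0 &
  Phi (init_config PP n) = n].
Proof.
split.
- by apply/existsP => -[k]; rewrite ffunE.
- by apply: big1 => k _; rewrite ffunE.
- rewrite /Phi (eq_bigr (fun _ => 1)); first by rewrite sum1_card card_ord.
  by move=> k _; rewrite ffunE.
Qed.

Lemma PP_correct : computes_1aware PP (threshold d).
Proof.
move=> n hn0; have [h1 h2 h3] := init_facts n; split.
- move=> hR C hr k.
  have hlt : n < d by move: hR; rewrite /threshold => /negbT; rewrite -ltnNge.
  have hI : [/\ ~~ HD (init_config PP n), NL (init_config PP n) <= 1 &
     Phi (init_config PP n) = n + cc * NL (init_config PP n)].
    by rewrite h2 h3 muln0 addn0.
  have := reach_inv (I := fun C => [/\ ~~ HD C, NL C <= 1 & Phi C = n + cc * NL C])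
    (fun A B hA ht => sinv_step hlt hA ht) hr hI.
  case=> hnd _ _; apply/negbTE; exact: nD_of hnd k.
- move=> hR E hE hf.
  have hle : d <= n by move: hR; rewrite /threshold.
  have hreach : forall C, reachable (init_config PP n) C ->
      exists D, reachable C D /\ (forall k, D k = Done).
    move=> C hr.
    have hI : HD C \/ Phi C = n + cc * NL C.
      apply: (reach_inv' hr); right; by rewrite h2 h3 muln0 addn0.
    have [D [hD1 hD2]] := live hle hI.
    have [D' [hD3 hD4]] := spread hD2.
    by exists D'; split => //; exact: reach_trans hD1 hD3.
  have hclosed : forall A B : config PP n, (forall k, A k = Done) -> transition A B ->
      forall k, B k = Done.
    move=> A B hA /trans_inv [i [j [hij hp hk]]] k.
    case: (eqVneq k i) => [->|hki].
      by move: hp; rewrite !hA ndone1 => -[].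
    case: (eqVneq k j) => [->|hkj].
      by move: hp; rewrite !hA ndone1 => -[].
    by rewrite hk // hA.
  have [i0 hi0] := fair_lemma hE hf hreach hclosed.
  by exists i0 => i hi k; rewrite (hi0 i hi k).
Qed.

End Proto.

From Stdlib Require Import Reals Lra.

Lemma expn_pow n : expn 2 n = Nat.pow 2 n.
Proof. elim: n => // n IH. rewrite expnS IH. reflexivity. Qed.

Lemma ln2_pos : (0 < ln 2)%R.
Proof. rewrite -ln_1; apply: ln_increasing; lra. Qed.

Lemma log_bound K d : expn 2 K <= d -> (INR K <= ln (INR d) / ln 2)%R.
Proof.
move=> h.
have h2 : (INR (expn 2 K) <= INR d)%R by apply: le_INR; apply/leP.
have hp : (0 < INR (expn 2 K))%R.
  by apply: lt_0_INR; apply/ltP; rewrite expn_gt0.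
have hl : (ln (INR (expn 2 K)) <= ln (INR d))%R.
  case: (Rle_lt_or_eq_dec _ _ h2) => hh; last by rewrite hh; lra.
  by apply: Rlt_le; apply: ln_increasing.
rewrite expn_pow pow_INR ln_pow in hl; last by (have : (INR 2 = 2)%R by simpl; lra); lra.
have h22 : INR 2 = 2%R by simpl; lra.
rewrite h22 in hl.
have l2 := ln2_pos.
apply: (Rmult_le_reg_r (ln 2)) => //.
rewrite /Rdiv Rmult_assoc Rinv_l ?Rmult_1_r //; lra.
Qed.

Lemma ones_pos x : 0 < x -> 0 < ones_bin x.
Proof. by move=> h; rewrite (ones_step h). Qed.

Lemma ones_iter P i : i <= ones_bin P -> ones_bin (s P i) = ones_bin P - i.
Proof.
elim: i => [|i IH] hi; first by rewrite subn0.
have h := IH (ltnW hi).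
rewrite /s iterS -/(s P i).
have hpos : 0 < s P i.
  case: (posnP (s P i)) => // e; move: h; rewrite e ones0; lia.
rewrite /fstep; move: (ones_step hpos); rewrite h; lia.
Qed.

Lemma s_props P : (forall i, i < ones_bin P -> 0 < s P i) /\ s P (ones_bin P) = 0.
Proof.
split.
  move=> i hi; have := ones_iter (ltnW hi); case: (posnP (s P i)) => // ->; rewrite ones0; lia.
have := ones_iter (leqnn (ones_bin P)); rewrite subnn.
case: (posnP (s P (ones_bin P))) => // h; move/ones_pos: h; lia.
Qed.

Lemma PP_card ab K' r d P : #|st (PP ab K' r d P)| = K'.+1 + r.+1 + 2.
Proof. by rewrite /= !card_sum !card_ord card_bool. Qed.

Definition trivP : protocol := mkP (fun _ : unit => true) tt (fun _ _ => (tt, tt)).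

Lemma real_bound K m d c : expn 2 K <= d -> m <= K + c + 3 ->
  (INR m <= ln (INR d) / ln 2 + INR c + 3)%R.
Proof.
move=> h1 h2; have := log_bound h1.
have : (INR m <= INR (K + c + 3))%R by apply: le_INR; apply/leP.
rewrite !plus_INR (_ : INR 3 = 3%R); last by simpl; lra.
lra.
Qed.

Theorem theorem1 :
  exists c : R, forall d : nat, 0 < d ->
    exists P : protocol,
      deterministic P /\ computes_1aware P (threshold d) /\
      (INR #|st P| <= ln (INR d) / ln 2 + INR (minn (ones_bin d) (zeros_bin d.-1)) + c)%R.
Proof.
exists 3%R => d hd.
case: (eqVneq d 1) => [->|hd1].
  exists trivP; split; first exact: mkP_det.
  split.
    move=> n hn; split; first by rewrite /threshold hn.
    by move=> _ E _ _; exists 0 => i _ k.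
  apply: (@real_bound 0) => //.
  have hc1 : #|st trivP| = 1 by rewrite /= card_unit.
  rewrite hc1; lia.
have hd2 : 1 < d by lia.
case: (boolP ((ones_bin d <= zeros_bin d.-1) || (d == 2))) => hc.
  set K := trunc_log 2 d.
  have hK : 0 < K by rewrite /K trunc_log_gt0 /=.
  have hK1 : expn 2 K <= d by apply: trunc_logP.
  have hK2 : d < expn 2 K.+1 by apply: trunc_log_ltn.
  set P := d - expn 2 K.
  have [hs hr] := s_props P.
  have e1 : K.-1.+1 = K by rewrite prednK.
  have HP : P < expn 2 K.-1.+1 by rewrite e1 /P; move: hK2; rewrite expnS; lia.
  have Hd : d = expn 2 K.-1.+1 + P by rewrite e1 /P; lia.
  exists (PP true K.-1 (ones_bin P) d P); split; first exact: mkP_det.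
  split; first exact: (@PP_correct true K.-1 (ones_bin P) d P hs hr HP Hd).
  rewrite PP_card; apply: (real_bound (K := K)) => //.
  have he : ones_bin d = (ones_bin P).+1 by rewrite /P /K; apply: ones_step; lia.
  case/orP: hc => [hc|/eqP e2].
    have -> : minn (ones_bin d) (zeros_bin d.-1) = ones_bin d by apply/minn_idPl.
    lia.
  have e3 : ones_bin d = 1 by rewrite e2.
  lia.
have hd3 : 2 < d by move: hc; rewrite negb_or => /andP [_ h]; move/eqP: h; lia.
have hze : zeros_bin d.-1 < ones_bin d by move: hc; rewrite negb_or => /andP [h _]; lia.
set K := trunc_log 2 d.-1.
have hK : 0 < K by rewrite /K trunc_log_gt0 /=; lia.
have hK1 : expn 2 K <= d.-1 by apply: trunc_logP => //; lia.
have hK2 : d.-1 < expn 2 K.+1 by apply: trunc_log_ltn.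
set P := expn 2 K.+1 - d.
have e1 : K.-1.+1 = K by rewrite prednK.
have HP : P < expn 2 K.-1.+1 by rewrite e1 /P; move: hK2 hK1; rewrite expnS; lia.
have Hd : d + P = expn 2 K.-1.+2 by rewrite e1 /P; lia.
have hr1 : ones_bin P = zeros_bin d.-1.
  have h1 := ones_compl hK2.
  have h2 := zeros_ones d.-1.
  rewrite -/K in h2.
  have -> : P = expn 2 K.+1 - 1 - d.-1 by rewrite /P; lia.
  lia.
have [hs hr] := s_props P.
exists (PP false K.-1 (ones_bin P) d P); split; first exact: mkP_det.
split; first exact: (@PP_correct false K.-1 (ones_bin P) d P hs hr HP Hd).
rewrite PP_card; apply: (real_bound (K := K)); first by lia.
have -> : minn (ones_bin d) (zeros_bin d.-1) = zeros_bin d.-1 by apply/minn_idPr; lia.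
lia.
Qed.
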